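(* Let $n\ge 1$ and $N>n$ be integers, let $\lambda>0$, $\beta\in(0,1)$, and let $\tilde b_0\neq 0$ be a real number. Let $\hat\Sigma\in\mathbb{R}^{(n+1)\times(n+1)}$ be a symmetric positive definite Toeplitz matrix, $[\hat\Sigma]_{ts}=\hat r_{|t-s|}$ for $t,s=1,\dots,n+1$. Let $K_{TC}\in\mathbb{R}^{(n+1)\times(n+1)}$ be the matrix with entries $[K_{TC}]_{ts}=\beta^{\max(t,s)}-\beta^{n+2}$ for $t,s=1,\dots,n+1$, let $v=[1,0,\dots,0]^T\in\mathbb{R}^{n+1}$, and define $$\hat{\mathbf b}_{ML}=[\hat b_0,\hat b_1,\dots,\hat b_n]^T=\tilde b_0^{-1}\left(\hat\Sigma+((N-n)\lambda K_{TC})^{-1}\right)^{-1}v .$$ If the polynomial $\hat b_{ML}(z)=\sum_{k=0}^n \hat b_k z^{-k}$ is not identically zero, then all its zeros lie strictly inside the unit circle, i.e. every (complex) root $\breve z$ of $\hat b_0 z^n+\hat b_1 z^{n-1}+\dots+\hat b_n$ satisfies $|\breve z|<1$.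
   Context: This is the regularized (kernel-based) maximum entropy estimate of the coefficients of a high-order AR model $b(z)y_t=e_t$ with a Gaussian prior $\mathbf b\sim\mathcal N(0,\lambda K_{TC})$ (''tuned-correlated kernel''). In the paper, $\hat r_k=\frac1N\sum_{t=1}^{N-k}y_ty_{t+k}$ are sample covariance lags of data $y_1,\dots,y_N$ and $\tilde b_0$ is a preliminary estimate of $b_0$; for the claim only the stated properties of $\hat\Sigma$ and $\tilde b_0$ are needed. *)

(* Defs.v *)
From HB Require Import structures.
From mathcomp Require Import all_boot all_order all_algebra.
From mathcomp Require Import complex.
Set Implicit Arguments. Unset Strict Implicit. Unset Printing Implicit Defensive.
Import Order.TTheory GRing.Theory Num.Theory.
Local Open Scope ring_scope.

(* Indices are 0-based: entry (i,j) of an (n+1)x(n+1) matrix corresponds to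
   the paper's (t,s) = (i+1, j+1). *)

Definition K_TC (R : ringType) (n : nat) (beta : R) : 'M[R]_(n.+1) :=
  \matrix_(i < n.+1, j < n.+1) (beta ^+ (maxn i j).+1 - beta ^+ n.+2).

Definition e1 (R : ringType) (n : nat) : 'cV[R]_(n.+1) :=
  \col_(i < n.+1) (if i == ord0 then 1 else 0).

Definition toeplitz_sym (R : ringType) (n : nat) (S : 'M[R]_(n.+1)) :=
  exists r : nat -> R, forall i j : 'I_(n.+1), S i j = r `|(i : nat) - (j : nat)|%N.

Definition posdef (R : numDomainType) (n : nat) (S : 'M[R]_(n.+1)) :=
  S^T = S /\ forall x : 'cV[R]_(n.+1), x != 0 -> 0 < (x^T *m S *m x) 0 0.

Definition bML (R : fieldType) (n N : nat) (lambda beta b0t : R)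
    (Sigma : 'M[R]_(n.+1)) : 'cV[R]_(n.+1) :=
  b0t^-1 *: (invmx (Sigma + invmx (((N - n)%:R * lambda) *: K_TC n beta)) *m e1 R n).

Definition bpoly (R : ringType) (n : nat) (b : 'cV[R]_(n.+1)) : {poly R} :=
  \sum_(k < n.+1) b k 0 *: 'X^(n - k).

(* Main.v *)
Require Import Defs.
From HB Require Import structures.
From mathcomp Require Import all_boot all_order all_algebra.
From mathcomp Require Import complex.
From mathcomp Require Import ring lra.
Import Order.TTheory GRing.Theory Num.Theory.
Set Implicit Arguments. Unset Strict Implicit. Unset Printing Implicit Defensive.
Local Open Scope ring_scope.
Local Open Scope complex_scope.

Lemma sum_delta (R : nzRingType) m (t : nat) (f : nat -> R) :
  \sum_(k < m) ((k : nat) == t)%:R * f k = if (t < m)%N then f t else 0.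
Proof.
elim: m => [|m IH]; first by rewrite big_ord0.
rewrite big_ord_recr /= IH.
case: (ltngtP t m) => [h|h|->].
- by rewrite (ltn_trans h (ltnSn m)) mul0r addr0.
- by rewrite ltnNge h mul0r addr0.
- by rewrite ltnSn mul1r add0r.
Qed.

Definition vv (R : nzRingType) (beta : R) (k : nat) := beta ^+ k.+1 - beta ^+ k.+2.

Lemma sum_ge (R : nzRingType) (beta : R) m t :
  \sum_(k < m) ((t <= k)%N)%:R * vv beta k =
  if (t <= m)%N then beta ^+ t.+1 - beta ^+ m.+1 else 0.
Proof.
elim: m => [|m IH]; first by rewrite big_ord0; case: t => //= ; rewrite subrr.
rewrite big_ord_recr /= IH /vv.
case: (ltngtP t m) => [h|h|->].
- by rewrite (ltnW (ltn_trans h (ltnSn m))) mul1r addrA subrK.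
- rewrite mul0r addr0; case: ifP => // ht.
  have -> : t = m.+1 by apply/eqP; rewrite eqn_leq ht h.
  by rewrite subrr.
- by rewrite leqnSn mul1r subrr add0r.
Qed.

Definition Umx (R : nzRingType) n : 'M[R]_n.+1 := \matrix_(i, j) ((i <= j)%N)%:R.
Definition Emx (R : nzRingType) n : 'M[R]_n.+1 :=
  \matrix_(i, j) (((j : nat) == i)%:R - ((j : nat) == i.+1)%:R).
Definition Dv (R : nzRingType) n (beta : R) : 'rV[R]_n.+1 := \row_k vv beta k.
Definition Dinv (R : fieldType) n (beta : R) : 'rV[R]_n.+1 := \row_k (vv beta k)^-1.

Lemma EU (R : nzRingType) n : Emx R n *m Umx R n = 1%:M.
Proof.
apply/matrixP => i j; rewrite !mxE.
under eq_bigr do rewrite !mxE mulrBl.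
rewrite sumrB.
rewrite (sum_delta _ i (fun k => ((k <= j)%N)%:R : R)).
rewrite (sum_delta _ i.+1 (fun k => ((k <= j)%N)%:R : R)).
rewrite ltn_ord.
case: (ltngtP i j) => [h|h|h].
- have hi : (i.+1 < n.+1)%N by apply: leq_ltn_trans h (ltn_ord j).
  rewrite hi; have /negbTE-> : i != j by rewrite neq_ltn h.
  by rewrite subrr.
- have /negbTE-> : i != j by rewrite neq_ltn h orbT.
  by case: ifP; rewrite subrr.
- have -> : i = j by apply: val_inj.
  by rewrite eqxx; case: ifP; rewrite subr0.
Qed.

Lemma K_UDU (R : nzRingType) n (beta : R) :
  K_TC n beta = Umx R n *m diag_mx (Dv n beta) *m (Umx R n)^T.
Proof.
apply/matrixP => i j; rewrite mul_mx_diag. rewrite [LHS]mxE. rewrite [RHS]mxE.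
under eq_bigr => k _ do rewrite !mxE.
have -> : \sum_(k < n.+1) ((i <= k)%N)%:R * vv beta k * ((j <= k)%N)%:R
   = \sum_(k < n.+1) ((maxn i j <= k)%N)%:R * vv beta k.
  apply: eq_bigr => k _; rewrite geq_max.
  by case: (i <= k)%N; case: (j <= k)%N; rewrite ?mul0r ?mulr0 ?mul1r ?mulr1.
rewrite (sum_ge beta (n.+1) (maxn i j)).
have -> : (maxn i j <= n.+1)%N by rewrite geq_max; apply/andP; split; apply: ltnW.
by [].
Qed.

Definition Pm (R : fieldType) n (beta c : R) : 'M[R]_n.+1 :=
  c^-1 *: ((Emx R n)^T *m diag_mx (Dinv n beta) *m Emx R n).

Lemma DD (R : fieldType) n (beta : R) : (forall k, vv beta k != 0) ->
  diag_mx (Dv n beta) *m diag_mx (Dinv n beta) = 1%:M.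
Proof.
move=> hv; apply/matrixP => i j; rewrite mul_mx_diag !mxE.
by case: (i =P j) => [->|_]; rewrite ?mulr1n ?mulfV ?mulr0n ?mul0r.
Qed.

Lemma invK (R : fieldType) n (beta c : R) : c != 0 -> (forall k, vv beta k != 0) ->
  invmx (c *: K_TC n beta) = Pm n beta c.
Proof.
move=> hc hv.
have H : (c *: K_TC n beta) *m Pm n beta c = 1%:M.
  rewrite /Pm -scalemxAl -scalemxAr scalerA mulfV // scale1r K_UDU.
  have UE : Umx R n *m Emx R n = 1%:M by apply: mulmx1C; apply: EU.
  have tr : (Umx R n)^T *m (Emx R n)^T = 1%:M by rewrite -trmx_mul EU trmx1.
  rewrite !mulmxA -[_ *m (Umx R n)^T *m (Emx R n)^T]mulmxA tr mulmx1.
  by rewrite -[Umx R n *m _ *m _]mulmxA DD // mulmx1 UE.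
have [hu _] := mulmx1_unit H.
by rewrite -[Pm n beta c](mulKmx hu) H mulmx1.
Qed.

Definition formR (R : nzRingType) n (M : 'M[R]_n.+1) (p q : nat -> R) :=
  \sum_(i < n.+1) \sum_(j < n.+1) p i * M i j * q j.

Lemma formR_ext (R : nzRingType) n (M : 'M[R]_n.+1) p q p' q' :
  (forall k, (k < n.+1)%N -> p k = p' k) -> (forall k, (k < n.+1)%N -> q k = q' k) ->
  formR M p q = formR M p' q'.
Proof.
move=> hp hq; apply: eq_bigr => i _; apply: eq_bigr => j _.
by rewrite hp // hq.
Qed.

Lemma formR_addM (R : nzRingType) n (M1 M2 : 'M[R]_n.+1) p q :
  formR (M1 + M2) p q = formR M1 p q + formR M2 p q.
Proof.
rewrite /formR -big_split; apply: eq_bigr => i _.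
rewrite -big_split; apply: eq_bigr => j _.
by rewrite mxE mulrDr mulrDl.
Qed.

Definition vadd (R : nzRingType) (p q : nat -> R) := fun k => p k + q k.
Definition vsc (R : nzRingType) (s : R) (p : nat -> R) := fun k => s * p k.

Lemma formR_addl (R : nzRingType) n (M : 'M[R]_n.+1) p1 p2 q :
  formR M (vadd p1 p2) q = formR M p1 q + formR M p2 q.
Proof.
rewrite /formR -big_split; apply: eq_bigr => i _.
rewrite -big_split; apply: eq_bigr => j _.
by rewrite /vadd !mulrDl.
Qed.

Lemma formR_addr (R : nzRingType) n (M : 'M[R]_n.+1) p q1 q2 :
  formR M p (vadd q1 q2) = formR M p q1 + formR M p q2.
Proof.
rewrite /formR -big_split; apply: eq_bigr => i _.
rewrite -big_split; apply: eq_bigr => j _.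
by rewrite /vadd !mulrDr.
Qed.

Lemma formR_scl (R : comNzRingType) n (M : 'M[R]_n.+1) s p q :
  formR M (vsc s p) q = s * formR M p q.
Proof.
rewrite /formR mulr_sumr; apply: eq_bigr => i _.
rewrite mulr_sumr; apply: eq_bigr => j _.
by rewrite /vsc -!mulrA.
Qed.

Lemma formR_scr (R : comNzRingType) n (M : 'M[R]_n.+1) s p q :
  formR M p (vsc s q) = s * formR M p q.
Proof.
rewrite /formR mulr_sumr; apply: eq_bigr => i _.
rewrite mulr_sumr; apply: eq_bigr => j _.
by rewrite /vsc mulrCA mulrA.
Qed.

Lemma formR_sym (R : comNzRingType) n (M : 'M[R]_n.+1) p q :
  M^T = M -> formR M p q = formR M q p.
Proof.
move=> hM; rewrite /formR exchange_big; apply: eq_bigr => i _.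
apply: eq_bigr => j _.
have -> : M j i = M i j by rewrite -[in LHS]hM mxE.
by ring.
Qed.

Lemma formR_mx (R : comNzRingType) n (M : 'M[R]_n.+1) p q :
  formR M p q = ((\col_(i < n.+1) p i)^T *m M *m \col_(i < n.+1) q i) 0 0.
Proof.
rewrite /formR mxE exchange_big; apply: eq_bigr => j _.
rewrite !mxE mulr_suml; apply: eq_bigr => i _.
by rewrite !mxE.
Qed.

Lemma wE (R : nzRingType) n (p : nat -> R) (k : 'I_n.+1) :
  \sum_(j < n.+1) Emx R n k j * p j = p k - (if (k.+1 < n.+1)%N then p k.+1 else 0).
Proof.
under eq_bigr do rewrite mxE mulrBl.
by rewrite sumrB (sum_delta _ k p) (sum_delta _ k.+1 p) ltn_ord.
Qed.

Lemma Pm_entry (R : fieldType) n (beta c : R) i j :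
  Pm n beta c i j = c^-1 * \sum_(k < n.+1) Emx R n k i * (vv beta k)^-1 * Emx R n k j.
Proof.
rewrite /Pm mxE mul_mx_diag mxE; congr (_ * _); apply: eq_bigr => k _.
by rewrite !mxE.
Qed.

Lemma formR_Pm0 (R : fieldType) n (beta c : R) p :
  formR (Pm n beta c) p p = c^-1 * \sum_(k < n.+1) (vv beta k)^-1 *
     (\sum_(i < n.+1) Emx R n k i * p i) * (\sum_(j < n.+1) Emx R n k j * p j).
Proof.
rewrite /formR mulr_sumr.
have -> : \sum_(k < n.+1) c^-1 * ((vv beta k)^-1 *
     (\sum_(i < n.+1) Emx R n k i * p i) * (\sum_(j < n.+1) Emx R n k j * p j))
  = \sum_(k < n.+1) \sum_(i < n.+1) \sum_(j < n.+1)
      c^-1 * (vv beta k)^-1 * Emx R n k i * p i * Emx R n k j * p j.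
  apply: eq_bigr => k _; rewrite (mulr_sumr _ _ _ (vv beta k)^-1) mulr_suml mulr_sumr; apply: eq_bigr => i _.
  rewrite mulr_sumr mulr_sumr; apply: eq_bigr => j _; ring.
rewrite [RHS]exchange_big; apply: eq_bigr => i _.
rewrite [RHS]exchange_big; apply: eq_bigr => j _.
rewrite Pm_entry !mulr_sumr mulr_suml; apply: eq_bigr => k _.
ring.
Qed.

Lemma formR_Pm (R : fieldType) n (beta c : R) p :
  formR (Pm n beta c) p p = c^-1 * \sum_(k < n.+1) (vv beta k)^-1 *
     (p k - (if (k.+1 < n.+1)%N then p k.+1 else 0)) ^+ 2.
Proof.
rewrite formR_Pm0; congr (_ * _); apply: eq_bigr => k _.
by rewrite wE -mulrA -expr2.
Qed.

Lemma vv_gt0 (R : realFieldType) (beta : R) k : 0 < beta -> beta < 1 -> 0 < vv beta k.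
Proof.
move=> b0 b1; rewrite /vv exprSr [beta ^+ k.+2]exprSr exprS.
have h : 0 < beta ^+ k by apply: exprn_gt0.
have -> : beta ^+ k * beta - beta * beta ^+ k * beta = beta ^+ k * beta * (1 - beta) by ring.
by apply: mulr_gt0; [apply: mulr_gt0|rewrite subr_gt0].
Qed.

Lemma formR_Pm_ge0 (R : realFieldType) n (beta c : R) p :
  0 < c -> 0 < beta -> beta < 1 -> 0 <= formR (Pm n beta c) p p.
Proof.
move=> c0 b0 b1; rewrite formR_Pm; apply: mulr_ge0; first by rewrite invr_ge0 ltW.
apply: sumr_ge0 => k _; apply: mulr_ge0; last by apply: sqr_ge0.
by rewrite invr_ge0 ltW // vv_gt0.
Qed.

Definition Ysh (R : nzRingType) (f : nat -> R) (k : nat) := if k is k'.+1 then f k' else 0.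

Lemma formR_Pm_shift (R : realFieldType) n (beta c : R) f :
  0 < c -> 0 < beta -> beta < 1 -> (0 < n)%N -> f n = 0 ->
  formR (Pm n beta c) f f <= formR (Pm n beta c) (Ysh f) (Ysh f).
Proof.
move=> c0 b0 b1 n0 fn.
rewrite !formR_Pm ler_pM2l ?invr_gt0 //.
rewrite big_ord_recr /= ltnn fn subr0 expr0n /= mulr0 addr0.
rewrite big_ord_recl /= ltnS n0.
apply: ler_wpDl; first by apply: mulr_ge0; [rewrite invr_ge0 ltW // vv_gt0|apply: sqr_ge0].
apply: ler_sum => k _.
rewrite /Ysh (_ : bump 0 k = k.+1) ?add0n; last by rewrite /bump leq0n add1n.
rewrite ltnS (ltn_ord k).
have -> : (if (k.+2 < n.+1)%N then f k.+1 else 0) = f k.+1.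
  case: ifP => // h; have -> : k.+1 = n; last by rewrite fn.
  by apply/eqP; rewrite eqn_leq ltn_ord /= leqNgt -ltnS h.
apply: ler_wpM2r; first by apply: sqr_ge0.
rewrite lef_pV2 ?posrE ?vv_gt0 //.
rewrite /vv [beta ^+ k.+2]exprS [beta ^+ k.+3]exprS -mulrBr.
rewrite -[X in _ <= X]mul1r ler_wpM2r ?ltW //.
exact: (vv_gt0 k b0 b1).
Qed.

Lemma formR_toep (R : comNzRingType) n (S : 'M[R]_n.+1) f :
  toeplitz_sym S -> f n = 0 -> formR S f f = formR S (Ysh f) (Ysh f).
Proof.
case=> r hr fn; rewrite /formR.
rewrite [LHS]big_ord_recr /= fn [X in _ + X]big1 ?addr0; last by move=> j _; rewrite !mul0r.
rewrite [RHS]big_ord_recl /= [X in X + _]big1 ?add0r; last by move=> j _; rewrite !mul0r.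
apply: eq_bigr => i _.
rewrite [LHS]big_ord_recr /= fn mulr0 addr0.
rewrite [RHS]big_ord_recl /= mulr0 add0r.
apply: eq_bigr => j _.
rewrite !hr /= /Ysh /bump /= !add1n.
by rewrite (distnDl 1 i j).
Qed.

Lemma posdef_ge0 (R : realFieldType) n (S : 'M[R]_n.+1) (p : nat -> R) :
  posdef S -> 0 <= formR S p p.
Proof.
move=> [_ pd]; rewrite formR_mx.
case: (eqVneq (\col_(i < n.+1) p i) 0) => [->|h]; last by apply/ltW/pd.
by rewrite mulmx0 mxE.
Qed.

Lemma posdef_gt0 (R : realFieldType) n (S : 'M[R]_n.+1) (p : nat -> R) :
  posdef S -> (\col_(i < n.+1) p i) != 0 -> 0 < formR S p p.
Proof. by move=> [_ pd] h; rewrite formR_mx; apply: pd. Qed.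

Lemma Pm_sym (R : fieldType) n (beta c : R) : (Pm n beta c)^T = Pm n beta c.
Proof. by rewrite /Pm linearZ /= !trmx_mul trmxK tr_diag_mx mulmxA. Qed.

Definition hc (R : rcfType) (a : nat -> R) (z : R[i]) (k : nat) : R[i] :=
  \sum_(j < k.+1) (a j)%:C * z ^+ (k - j).

Lemma hc_S (R : rcfType) (a : nat -> R) z k : hc a z k.+1 = (a k.+1)%:C + z * hc a z k.
Proof.
rewrite /hc big_ord_recr [RHS]addrC; apply: congr2; last first.
  by rewrite (_ : (k.+1 - _)%N = 0%N) ?subnn // expr0 mulr1.
rewrite mulr_sumr; apply: eq_bigr => j _.
have hj : (j <= k)%N by rewrite -ltnS ltn_ord.
by rewrite [in LHS]subSn // exprS mulrCA.
Qed.

Lemma ReM (R : rcfType) (x y : R[i]) : complex.Re (x * y) = complex.Re x * complex.Re y - complex.Im x * complex.Im y.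
Proof. by case: x => a b; case: y => c d. Qed.
Lemma ImM (R : rcfType) (x y : R[i]) : complex.Im (x * y) = complex.Re x * complex.Im y + complex.Im x * complex.Re y.
Proof. by case: x => a b; case: y => c d. Qed.
Lemma ReD (R : rcfType) (x y : R[i]) : complex.Re (x + y) = complex.Re x + complex.Re y.
Proof. by case: x => a b; case: y => c d. Qed.
Lemma ImD (R : rcfType) (x y : R[i]) : complex.Im (x + y) = complex.Im x + complex.Im y.
Proof. by case: x => a b; case: y => c d. Qed.
Lemma ReC (R : rcfType) (x : R) : complex.Re (x%:C) = x. Proof. by []. Qed.
Lemma ImC (R : rcfType) (x : R) : complex.Im (x%:C) = 0. Proof. by []. Qed.

Lemma hc_Re (R : rcfType) (a : nat -> R) z k :
  complex.Re (hc a z k) = a k + complex.Re z * Ysh (fun k => complex.Re (hc a z k)) k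
                      - complex.Im z * Ysh (fun k => complex.Im (hc a z k)) k.
Proof.
case: k => [|k].
  rewrite /hc big_ord1 (_ : (0 - _)%N = 0%N) // expr0 mulr1 /Ysh !mulr0 subr0 addr0.
  exact: ReC.
by rewrite hc_S ReD ReM ReC /Ysh addrA.
Qed.

Lemma hc_Im (R : rcfType) (a : nat -> R) z k :
  complex.Im (hc a z k) = complex.Re z * Ysh (fun k => complex.Im (hc a z k)) k
                      + complex.Im z * Ysh (fun k => complex.Re (hc a z k)) k.
Proof.
case: k => [|k].
  rewrite /hc big_ord1 (_ : (0 - _)%N = 0%N) // expr0 mulr1 /Ysh !mulr0 addr0.
  exact: ImC.
by rewrite hc_S ImD ImM ImC /Ysh add0r.
Qed.



Lemma hc_root (R : rcfType) n (b : 'cV[R]_n.+1) (z : R[i]) :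
  root (map_poly (fun x : R => Complex x 0) (bpoly b)) z ->
  hc (fun k => b (inord k) 0) z n = 0.
Proof.
move=> /rootP.
have -> : map_poly (fun x : R => Complex x 0) (bpoly b) = map_poly (real_complex R) (bpoly b).
  by apply: eq_map_poly.
rewrite /bpoly rmorph_sum horner_sum => <-.
apply: eq_bigr => k _.
change ((b (inord k) 0)%:C * z ^+ (n - k) = (map_poly (real_complex R) (b k 0 *: 'X^(n - k))).[z]).
by rewrite map_polyZ map_polyXn hornerZ hornerXn inord_val.
Qed.

Lemma final_ineq (R : realFieldType) (A S T : R) : 0 < A -> 0 <= T -> A + S * T <= T -> S < 1.
Proof. move=> hA hT h. nra. Qed.

Unset Implicit Arguments.
Local Close Scope complex_scope.

Theorem proposition2 (R : rcfType) (n N : nat) (lambda beta b0t : R)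
    (Sigma : 'M[R]_(n.+1)) :
  (1 <= n)%N -> (n < N)%N ->
  0 < lambda -> 0 < beta -> beta < 1 -> b0t != 0 ->
  posdef Sigma -> toeplitz_sym Sigma ->
  bpoly (bML N lambda beta b0t Sigma) != 0 ->
  forall z : R[i],
    root (map_poly (fun x : R => Complex x 0) (bpoly (bML N lambda beta b0t Sigma))) z ->
    `|z| < 1.
Proof.
move=> n1 nN l0 b0 b1 hb0 pd tp hpoly z hz.
pose c := ((N - n)%:R * lambda).
have c0 : 0 < c by rewrite /c mulr_gt0 // ltr0n subn_gt0.
have hv : forall k, vv beta k != 0 by move=> k; rewrite lt0r_neq0 // vv_gt0.
have hP : invmx (c *: K_TC n beta) = Pm n beta c by apply: invK; rewrite ?lt0r_neq0.
pose M := Sigma + Pm n beta c.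
have Msym : M^T = M by rewrite /M raddfD /= Pm_sym pd.1.
have Munit : M \in unitmx.
  rewrite unitmxE unitfE; apply/negP => /det0P [v vn0 hvM].
  pose p := fun k : nat => v 0 (inord k).
  have colp : \col_(i < n.+1) p i = v^T.
    by apply/matrixP => i j; rewrite !mxE /p inord_val (ord1 j).
  have h0 : formR M p p = 0 by rewrite formR_mx colp trmxK hvM mul0mx mxE.
  have h1 : 0 < formR Sigma p p by apply: posdef_gt0; rewrite // colp trmx_eq0.
  have h2 : 0 <= formR (Pm n beta c) p p by apply: formR_Pm_ge0.
  move: h0; rewrite /M formR_addM => h0; lra.
pose b := bML N lambda beta b0t Sigma.
have hMb : M *m b = b0t^-1 *: e1 R n.
  by rewrite /b /bML -/c hP -/M -scalemxAr mulmxA mulmxV // mul1mx.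
pose a := fun k : nat => b (inord k) 0.
have cola : \col_(i < n.+1) a i = b.
  by apply/matrixP => i j; rewrite [LHS]mxE /a inord_val (ord1 j).
have Fa : forall u, formR M u a = b0t^-1 * u 0%N.
  move=> u; rewrite formR_mx cola -mulmxA hMb -scalemxAr mxE.
  congr (_ * _); rewrite mxE big_ord_recl big1 ?addr0.
    by rewrite !mxE eqxx mulr1.
  by move=> i _; rewrite !mxE mulr0.
have Fa' : forall f, formR M a (Ysh f) = 0.
  by move=> f; rewrite formR_sym // Fa /Ysh mulr0.
have Fa'' : forall f, formR M (Ysh f) a = 0.
  by move=> f; rewrite Fa /Ysh mulr0.
have bnz : b != 0.
  apply: contra hpoly => /eqP hb; apply/eqP; rewrite /bpoly big1 // => k _.
  by rewrite -/b hb mxE scale0r.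
have apos : 0 < formR M a a.
  have h1 : 0 < formR Sigma a a by apply: posdef_gt0; rewrite // cola.
  have h2 : 0 <= formR (Pm n beta c) a a by apply: formR_Pm_ge0.
  rewrite /M formR_addM; lra.
have hcn : hc a z n = 0 := hc_root hz.
pose xr := fun k => complex.Re (hc a z k).
pose xi := fun k => complex.Im (hc a z k).
have xrn : xr n = 0 by rewrite /xr hcn.
have xin : xi n = 0 by rewrite /xi hcn.
pose yr := Ysh xr. pose yi := Ysh xi.
pose zr := complex.Re z. pose zi := complex.Im z.
have exr : formR M xr xr = formR M (vadd a (vadd (vsc zr yr) (vsc (- zi) yi)))
                                   (vadd a (vadd (vsc zr yr) (vsc (- zi) yi))).
  by apply: formR_ext => k _; rewrite /xr hc_Re /vadd /vsc /yr /yi /xr /xi; ring.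
have exi : formR M xi xi = formR M (vadd (vsc zr yi) (vsc zi yr)) (vadd (vsc zr yi) (vsc zi yr)).
  by apply: formR_ext => k _; rewrite /xi hc_Im /vadd /vsc /yr /yi /xr /xi.
have Pge : forall f, 0 <= formR M f f.
  move=> f; rewrite /M formR_addM.
  have h1 : 0 <= formR Sigma f f by apply: posdef_ge0.
  have h2 : 0 <= formR (Pm n beta c) f f by apply: formR_Pm_ge0.
  lra.
have shift : forall f, f n = 0 -> formR M f f <= formR M (Ysh f) (Ysh f).
  move=> f fn; rewrite /M !formR_addM (formR_toep tp fn) lerD2l.
  exact: formR_Pm_shift.
have hxr := shift xr xrn. have hxi := shift xi xin.
have sym := formR_sym yi yr Msym.
rewrite exr !formR_addl !formR_addr !formR_scl !formR_scr !Fa' !Fa'' in hxr.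
rewrite exi !formR_addl !formR_addr !formR_scl !formR_scr in hxi.
have key : zr ^+ 2 + zi ^+ 2 < 1.
  apply: (@final_ineq _ (formR M a a) _ (formR M yr yr + formR M yi yi)) => //.
    by apply: addr_ge0; apply: Pge.
  rewrite -/yr -/yi in hxr hxi.
  rewrite sym in hxr hxi. lra.
rewrite normc_def (_ : 1 = real_complex R 1) // ltcR -sqrtr1 ltr_sqrt ?ltr01 //.
Qed.
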